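(* Let $\pi_1,\dots,\pi_n,\pi_{n+1}\ge 0$ with $\pi_i>0$ for some $i\le n$, and let $\boldsymbol P\in\mathcal R_{n+1}$ with $0<\Pr[P_{n+1}=0]<1$. Define the active-administrator compensations $W_i^{\mathrm{active}}=\big(\sum_{j=1}^{n+1}\pi_j\big)P_i$ for $i=1,\dots,n+1$, and the passive-administrator compensations (for the investment vector $(\pi_1,\dots,\pi_n,0)$) $W_i^{\mathrm{passive}}=\big(\sum_{j=1}^{n}\pi_j\big)P_i+\pi_iP_{n+1}$ for $i=1,\dots,n$. Then the following are equivalent: (a) $\pi_i=E[W_i^{\mathrm{active}}]$ for $i=1,\dots,n$; (b) $\pi_i=E[W_i^{\mathrm{passive}}]$ for $i=1,\dots,n$, and $\pi_{n+1}=E[W_{n+1}^{\mathrm{active}}]$.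
   Context: All random variables live on a probability space $(\Omega,\mathcal F,\Pr)$; $L^0_+$ denotes the non-negative random variables. The set of relative compensation vectors is $$\mathcal R_{n+1}=\Big\{(P_1,\dots,P_{n+1})\in (L^0_+)^{n+1}:\ \sum_{j=1}^{n+1}P_j=1,\ P_{n+1}=\mathbf 1\Big(\sum_{j=1}^nP_j=0\Big)\Big\},$$ where $\mathbf 1(A)$ denotes the indicator of the event $A$. *)

(* Defs.v *)
From HB Require Import structures.
From mathcomp Require Import all_boot all_order all_algebra.
From mathcomp Require Import all_classical all_reals all_analysis.
Set Implicit Arguments. Unset Strict Implicit. Unset Printing Implicit Defensive.
Import Order.TTheory GRing.Theory Num.Theory.
Local Open Scope ring_scope.

(* Relative compensation vectors R_{n+1}: components indexed by 'I_n.+1,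
   the last index (ord_max, value n) playing the role of P_{n+1}.
   Elements of L^0_+ are measurable, a.s. nonnegative; the identities hold a.s.
   (equality in L^0). *)
Definition rel_comp {d} {T : measurableType d} {R : realType}
    (Pr : probability T R) (n : nat) (P : 'I_n.+1 -> T -> R) : Prop :=
  (forall j, measurable_fun setT (P j)) /\
  (forall j, {ae Pr, forall w, 0 <= P j w}) /\
  {ae Pr, forall w, \sum_(j < n.+1) P j w = 1} /\
  {ae Pr, forall w,
     P ord_max w = ((\sum_(j < n.+1 | (j < n)%N) P j w) == 0)%:R}.

(* Main.v *)
Require Import Defs.
From HB Require Import structures.
From mathcomp Require Import all_boot all_order all_algebra.
From mathcomp Require Import all_classical all_reals all_analysis.
From mathcomp Require Import measurable_realfun.
From mathcomp Require Import ring lra zify.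
Import Order.TTheory GRing.Theory Num.Theory.
Local Open Scope ring_scope.

Section helpers.
Context d (T : measurableType d) (R : realType) (Pr : probability T R).

Lemma Lfun_bnd (X : T -> R) (M : R) : measurable_fun setT X ->
  {ae Pr, forall w, `|X w| <= M} -> X \in Lfun Pr 1.
Proof.
move=> mX bX; apply/Lfun1_integrable; apply/integrableP; split.
  exact/measurable_EFinP.
apply: (@le_lt_trans _ _ (\int[Pr]_(x in setT) (cst `|M|%:E x))%E).
  apply: ae_ge0_le_integral.
  - by [].
  - by [].
  - by do 2 apply: measurableT_comp => //.
  - by move=> x _; rewrite lee_fin.
  - by [].
  - by apply: filterS bX => w h _ /=; rewrite lee_fin (le_trans h) // ler_norm.
by rewrite integral_cst //= probability_setT mule1 ltry.
Qed.

Lemma E_ae (X Y : T -> R) : measurable_fun setT X -> measurable_fun setT Y ->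
  {ae Pr, forall w, X w = Y w} -> 'E_Pr[X]%E = 'E_Pr[Y]%E.
Proof.
move=> mX mY h; rewrite unlock; apply: ae_eq_integral => //.
- exact/measurable_EFinP.
- exact/measurable_EFinP.
- by apply: filterS h => w -> _.
Qed.
End helpers.

Theorem corollary1 (d : measure_display) (T : measurableType d) (R : realType)
  (Pr : probability T R) (n : nat) (pi : 'I_n.+1 -> R)
  (P : 'I_n.+1 -> T -> R) :
  (forall j, 0 <= pi j) ->
  (exists i : 'I_n.+1, (i < n)%N /\ 0 < pi i) ->
  rel_comp Pr P ->
  (0 < Pr [set w : T | P ord_max w = 0%R]%classic < 1)%E ->
  let W_active (i : 'I_n.+1) := fun w => (\sum_(j < n.+1) pi j) * P i w in
  let W_passive (i : 'I_n.+1) := fun w =>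
    (\sum_(j < n.+1 | (j < n)%N) pi j) * P i w + pi i * P ord_max w in
  (forall i : 'I_n.+1, (i < n)%N -> (pi i)%:E = ('E_Pr[W_active i])%E) <->
  ((forall i : 'I_n.+1, (i < n)%N -> (pi i)%:E = ('E_Pr[W_passive i])%E) /\
   (pi ord_max)%:E = ('E_Pr[W_active ord_max])%E).
Proof.
move=> _ _ [mP [P0 [Psum Pmax]]] hPr W_a W_p.
have allpos : {ae Pr, forall w, forall k, 0 <= P k w}.
  have H (s : seq 'I_n.+1) : {ae Pr, forall w, forall k, k \in s -> 0 <= P k w}.
    elim: s => [|k s IH]; first by apply: (@aeW _ _ _ Pr) => w k; rewrite in_nil.
    apply: filterS2 (P0 k) IH => w h1 h2 j; rewrite inE => /orP[/eqP->|]//.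
    exact: h2.
  by apply: filterS (H (enum 'I_n.+1)) => w h k; apply: h; rewrite mem_enum.
have mPc (a : R) j : measurable_fun setT (fun w => a * P j w).
  exact: (measurable_funM (measurable_cst a) (mP j)).
have LPc (a : R) j : (fun w => a * P j w) \in Lfun Pr 1.
  apply: (@Lfun_bnd _ _ _ _ _ `|a|) => //.
  apply: filterS2 allpos Psum => w h hs.
  rewrite normrM (ger0_norm (h j)) ler_piMr //.
  by rewrite -hs (bigD1 j) //= lerDl sumr_ge0.
have LP j : P j \in Lfun Pr 1.
  suff -> : P j = (fun w => 1 * P j w) by [].
  by apply/funext => w; rewrite mul1r.
pose e j := fine 'E_Pr[P j]%E.
have Ee j : 'E_Pr[P j]%E = (e j)%:E by rewrite fineK // expectation_fin_num.
have EZ (a : R) j : 'E_Pr[fun w => (a * P j w)%R]%E = (a * e j)%:E.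
  rewrite EFinM -Ee -expectationZl //; congr (expectation _ _).
  by apply/funext => w /=; rewrite mulrC.
have ED (a b : R) i j : 'E_Pr[fun w => (a * P i w + b * P j w)%R]%E = (a * e i + b * e j)%:E.
  by rewrite EFinD -!EZ -expectationD.
have sum1 : \sum_(j < n.+1) e j = 1.
  apply: EFin_inj; rewrite -sumEFin.
  under eq_bigr do rewrite -Ee.
  transitivity ('E_Pr[fun w => (\sum_(j < n.+1) P j w)%R])%E.
    rewrite !expectation.unlock.
    rewrite -(@integral_sum _ _ _ Pr setT measurableT _ (fun j w => (P j w)%:E)); last first.
      by move=> j; apply/Lfun1_integrable.
    by apply: eq_integral => w _; rewrite sumEFin.
  rewrite (@E_ae _ _ _ _ _ (cst 1)) ?expectation_cst //.
  exact: measurable_sum.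
pose A := [set w : T | P ord_max w = 0%R]%classic.
have mA : measurable A.
  have := mP ord_max measurableT [set 0%R]%classic (measurable_set1 0%R); rewrite setTI; exact.
have hA : (Pr A + (e ord_max)%:E = 1)%E.
  rewrite -expectation_indic // -Ee -expectationD //; last first.
    apply: (@Lfun_bnd _ _ _ _ _ 1); first exact/measurable_indic.
    by apply: aeW => w; rewrite indicE; case: (w \in A); rewrite ?normr1 ?normr0.
  rewrite (@E_ae _ _ _ _ _ (cst 1)) ?expectation_cst //.
    apply: measurable_funD => //; exact/measurable_indic.
  apply: filterS Pmax => w h /=.
  case: (\sum_(j < n.+1 | (j < n)%N) P j w == 0) h => h; rewrite indicE h /=.
    rewrite memNset ?add0r //.
    by rewrite /A /= h; apply/eqP; rewrite oner_eq0.
  by rewrite mem_set ?addr0 // /A /= h.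
have [a [hAa a0]] : exists a, Pr A = a%:E /\ (0 < a)%R.
  case/andP: hPr => h0 h1.
  have fA : Pr A \is a fin_num by rewrite ge0_fin_numE ?(ltW h0) // (lt_trans h1) ?ltry.
  by exists (fine (Pr A)); rewrite fineK //; split => //; rewrite -lte_fin fineK.
have em1 : e ord_max = 1 - a.
  have h : (a + e ord_max)%:E = 1%:E by rewrite EFinD -hAa.
  by have := EFin_inj h => h2; rewrite -h2; ring.
have hne (j : 'I_n.+1) : (j != ord_max) = (j < n)%N.
  have := ltn_ord j; rewrite -(inj_eq val_inj) /=; lia.
set S := \sum_(j < n.+1) pi j.
set S' := \sum_(j < n.+1 | (j < n)%N) pi j.
have hS : S = pi ord_max + S'.
  by rewrite /S (bigD1 ord_max) //=; congr (_ + _); apply: eq_bigl => j; exact: hne.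
have he : 1 = e ord_max + \sum_(j < n.+1 | (j < n)%N) e j.
  by rewrite -sum1 (bigD1 ord_max) //=; congr (_ + _); apply: eq_bigl => j; exact: hne.
have EA i : 'E_Pr[W_a i]%E = (S * e i)%:E := EZ _ _.
have EP i : 'E_Pr[W_p i]%E = (S' * e i + pi i * e ord_max)%:E := ED _ _ _ _.
have defS' : S' = \sum_(j < n.+1 | (j < n)%N) pi j by [].
clearbody e S S'.
split.
- move=> ha.
  have hai (i : 'I_n.+1) : (i < n)%N -> pi i = S * e i.
    by move=> hi; apply: EFin_inj; rewrite -EA; exact: ha.
  have hS' : S' = S * (1 - e ord_max).
    rewrite [in RHS]he (addrC (e ord_max)) addrK mulr_sumr defS'.
    by apply: eq_bigr => j hj; exact: hai.
  split.
  + move=> i hi; rewrite EP; congr (_%:E); rewrite hS' (hai i hi); ring.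
  + rewrite EA; congr (_%:E).
    have -> : pi ord_max = S - S' by rewrite hS; ring.
    by rewrite hS'; ring.
- move=> [hb hm].
  have hbi (i : 'I_n.+1) : (i < n)%N -> pi i = S' * e i + pi i * e ord_max.
    by move=> hi; apply: EFin_inj; rewrite -EP; exact: hb.
  have hmi : pi ord_max = S * e ord_max by apply: EFin_inj; rewrite -EA.
  have hS' : S' = S - S * e ord_max by rewrite -hmi hS; ring.
  move=> i hi; rewrite EA; congr (_%:E).
  have h1 : pi i * (1 - e ord_max) = S' * e i.
    by rewrite mulrBr mulr1 {1}(hbi i hi); ring.
  have : (pi i - S * e i) * (1 - e ord_max) = 0.
    by rewrite mulrBl h1 hS'; ring.
  have ha1 : 1 - e ord_max = a by rewrite em1; ring.
  rewrite ha1 => /eqP; rewrite mulf_eq0 (gt_eqF a0) orbF subr_eq0.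
  by move/eqP.
Qed.
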